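(* Let $(X,\tau)$ be a locally convex space and let $T\in\mathcal{M}(X)$ be locally-NI. Then $[\varphi_{T}=c]=[\varphi_{T}\le c]=[\psi_{T}=c]$, and this set is the unique identifiable extension of $T$.
   Context: $(X,\tau)$ is a non-trivial Hausdorff locally convex space, $X^*$ its dual with weak-star topology $\omega^*$, $Z=X\times X^*$ with topology $\tau\times\omega^*$, $c(x,x^* )=\langle x,x^*\rangle$. Operators are identified with their graphs; $D(T)$ is the domain; $T|_V$ has graph $\operatorname{Graph}T\cap(V\times X^* )$. $\varphi_{T}(x,x^{*})=\sup\{\langle x,u^{*}\rangle+\langle u,x^{*}\rangle-\langle u,u^{*}\rangle\mid(u,u^{*})\in T\}$ ($\sup\emptyset=-\infty$); $\psi_T$ is the $\tau\times\omega^*$-lsc convex hull of $c+\iota_{\operatorname{Graph}T}$; $[f\le g]=\{z\mid f(z)\le g(z)\}$, etc. $\mathcal M(X)$: monotone operators with non-empty graph. $T$ is $V$-NI if $\varphi_{T|_V}\ge c$ on $V\times X^*$, and locally-NI if it is $V$-NI for every open convex $V$ with $V\cap D(T)\ne\emptyset$. $V$ identifies $S$ if $[\varphi_{S|_V}\le c]\cap(V\times X^* )\subset\operatorname{Graph}S$; $S$ is identifiable if every open convex $V$ with $V\cap D(S)\ne\emptyset$ identifies $S$. An extension of $T$ is an operator whose graph contains $\operatorname{Graph}T$. *)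

(* Defs.v *)
From HB Require Import structures.
From mathcomp Require Import all_boot all_order all_algebra.
From mathcomp Require Import all_classical all_reals.
From mathcomp Require Import topology normedtype tvs ereal.
Set Implicit Arguments. Unset Strict Implicit. Unset Printing Implicit Defensive.
Import Order.TTheory GRing.Theory Num.Theory.
Local Open Scope classical_set_scope.
Local Open Scope ring_scope.

(* X : tvsType R is a real locally convex topological vector space.
   Elements x^* of the dual X^* are represented as functions X -> R that are
   linear and (tau-)continuous; Z = X * X^* is represented inside
   X * (X -> R), restricted to pairs whose second component is in the dual. *)

Section Defs.
Context {R : realType} {X : tvsType R}.

Definition dual : set (X -> R) :=
  [set f | (forall (a : R) (x y : X), f (a *: x + y) = a * f x + f y)
           /\ continuous (f : X -> R^o)].

Definition Zd : set (X * (X -> R)) := [set z | dual z.2].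

Definition coupling (z : X * (X -> R)) : R := z.2 z.1.

(* an operator is identified with its graph, a subset of X x X^* *)
Definition operator (T : set (X * (X -> R))) : Prop := T `<=` Zd.

Definition dom (T : set (X * (X -> R))) : set X :=
  [set x | exists xs, T (x, xs)].

Definition restr (T : set (X * (X -> R))) (V : set X) : set (X * (X -> R)) :=
  [set z | T z /\ V z.1].

Definition monotone_op (T : set (X * (X -> R))) : Prop :=
  forall z w, T z -> T w ->
    0 <= z.2 z.1 - z.2 w.1 - w.2 z.1 + w.2 w.1.

Definition MX (T : set (X * (X -> R))) : Prop :=
  operator T /\ T !=set0 /\ monotone_op T.

(* Fitzpatrick function; ereal_sup set0 = -oo *)
Definition phi (T : set (X * (X -> R))) (z : X * (X -> R)) : \bar R :=
  ereal_sup [set ((u.2 z.1 + z.2 u.1 - u.2 u.1)%:E) | u in T].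

Definition convex_set_X (V : set X) : Prop :=
  forall x y, V x -> V y -> forall t : R, 0 <= t <= 1 ->
    V (t *: x + (1 - t) *: y).

Definition zcomb (t : R) (z w : X * (X -> R)) : X * (X -> R) :=
  (t *: z.1 + (1 - t) *: w.1, fun u => t * z.2 u + (1 - t) * w.2 u).

(* convexity of an extended-real function on Z (epigraph convexity) *)
Definition convex_fun_Z (f : X * (X -> R) -> \bar R) : Prop :=
  forall z w, Zd z -> Zd w -> forall a b : R,
    (f z <= a%:E)%E -> (f w <= b%:E)%E -> forall t : R, 0 <= t <= 1 ->
    (f (zcomb t z w) <= (t * a + (1 - t) * b)%:E)%E.

(* lower semicontinuity w.r.t. tau x weak-star on Z:
   a basic weak-star neighbourhood of x^* is
   {y^* | |<a, y^* - x^*>| < eps for all a in a finite list} *)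
Definition lsc_Z (f : X * (X -> R) -> \bar R) : Prop :=
  forall z, Zd z -> forall r : R, (r%:E < f z)%E ->
    exists U, nbhs z.1 U /\
    exists (xs : seq X) (eps : R), 0 < eps /\
      forall y g, U y -> dual g ->
        (forall a, a \in xs -> `|g a - z.2 a| < eps) ->
        (r%:E < f (y, g))%E.

Definition c_plus_ind (T : set (X * (X -> R))) (z : X * (X -> R)) : \bar R :=
  if `[< T z >] then (coupling z)%:E else +oo%E.

(* psi_T : the tau x w*-lsc convex hull of c + iota_{Graph T},
   i.e. the pointwise supremum of all lsc convex minorants on Z *)
Definition psi (T : set (X * (X -> R))) (z : X * (X -> R)) : \bar R :=
  ereal_sup [set g z | g in [set g : X * (X -> R) -> \bar R |
     lsc_Z g /\ convex_fun_Z g /\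
     (forall w, Zd w -> (g w <= c_plus_ind T w)%E)]].

Definition open_convex (V : set X) : Prop := open V /\ convex_set_X V.

Definition V_NI (T : set (X * (X -> R))) (V : set X) : Prop :=
  forall z, Zd z -> V z.1 -> ((coupling z)%:E <= phi (restr T V) z)%E.

Definition locally_NI (T : set (X * (X -> R))) : Prop :=
  forall V, open_convex V -> V `&` dom T !=set0 -> V_NI T V.

Definition identifies (V : set X) (S : set (X * (X -> R))) : Prop :=
  [set z | Zd z /\ V z.1 /\ (phi (restr S V) z <= (coupling z)%:E)%E]
    `<=` S.

Definition identifiable (S : set (X * (X -> R))) : Prop :=
  forall V, open_convex V -> V `&` dom S !=set0 -> identifies V S.

Definition set_phi_eq_c (T : set (X * (X -> R))) : set (X * (X -> R)) :=
  [set z | Zd z /\ phi T z = (coupling z)%:E].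
Definition set_phi_le_c (T : set (X * (X -> R))) : set (X * (X -> R)) :=
  [set z | Zd z /\ (phi T z <= (coupling z)%:E)%E].
Definition set_psi_eq_c (T : set (X * (X -> R))) : set (X * (X -> R)) :=
  [set z | Zd z /\ psi T z = (coupling z)%:E].

End Defs.

(* Main.v *)
From HB Require Import structures.
Require Import Defs.
From mathcomp Require Import all_boot all_order all_algebra.
From mathcomp Require Import all_classical all_reals.
From mathcomp Require Import topology normedtype tvs ereal.
From mathcomp Require Import ring lra.
Set Implicit Arguments. Unset Strict Implicit. Unset Printing Implicit Defensive.
Import Order.TTheory GRing.Theory Num.Theory.
Local Open Scope classical_set_scope.
Local Open Scope ring_scope.
Section HBsec.
Context {R : realType} {E : lmodType R}.
Implicit Types p q : E -> R.

Lemma eqle (a b : R) : a = b -> a <= b.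
Proof. by move=> ->. Qed.

Lemma inf_le_img {T : Type} (A : set T) (F : T -> R) (b : R) a :
  (forall t, A t -> b <= F t) -> A a -> inf [set F t | t in A] <= F a.
Proof.
move=> hb Aa; apply: ge_inf; last by exists a.
by exists b => _ [t At <-]; exact: hb.
Qed.

Lemma inf_ge_img {T : Type} (A : set T) (F : T -> R) (x : R) :
  A !=set0 -> (forall t, A t -> x <= F t) -> x <= inf [set F t | t in A].
Proof.
move=> [a Aa] hx; apply: lb_le_inf; first by exists (F a), a.
by move=> _ [t At <-]; exact: hx.
Qed.

Definition sublin p := (forall x y, p (x + y) <= p x + p y) /\
  (forall (t : R) x, 0 < t -> p (t *: x) = t * p x).

Lemma sublin0 p : sublin p -> p 0 = 0.
Proof.
move=> [_ hZ]; have h2 : (0:R) < 2 by lra.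
have := hZ 2 0 h2; rewrite scaler0 => h; lra.
Qed.

Lemma sublinZ p t x : sublin p -> 0 <= t -> p (t *: x) = t * p x.
Proof.
move=> hp; rewrite le_eqVlt => /orP[/eqP <-|t0]; last exact: hp.2.
by rewrite scale0r mul0r sublin0.
Qed.

Lemma sublinN p x : sublin p -> - p (- x) <= p x.
Proof.
move=> hp; have := hp.1 x (- x); rewrite subrr sublin0 //; lra.
Qed.

Definition shift p y x :=
  inf [set p (x + t *: y) - t * p y | t in [set t : R | 0 <= t]].

Lemma shift_lb p y x t : sublin p -> 0 <= t ->
  - p (- x) <= p (x + t *: y) - t * p y.
Proof.
move=> hp t0; have := hp.1 (x + t *: y) (- x).
rewrite addrC addKr sublinZ //; lra.
Qed.

Lemma shift_le p y x t : sublin p -> 0 <= t ->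
  shift p y x <= p (x + t *: y) - t * p y.
Proof. by move=> hp t0; apply: (@inf_le_img _ _ _ (- p (- x))) => // s; exact: shift_lb. Qed.

Lemma shift_ge p y x z : sublin p ->
  (forall t, 0 <= t -> z <= p (x + t *: y) - t * p y) -> z <= shift p y x.
Proof. by move=> hp h; apply: inf_ge_img => //; exists 0 => /=. Qed.

Lemma shift_sublin p y : sublin p -> sublin (shift p y).
Proof.
move=> hp; split.
- move=> x1 x2.
  have h : forall t1 t2, 0 <= t1 -> 0 <= t2 -> shift p y (x1 + x2) <=
      (p (x1 + t1 *: y) - t1 * p y) + (p (x2 + t2 *: y) - t2 * p y).
    move=> t1 t2 t10 t20.
    apply: (le_trans (shift_le _ _ hp (addr_ge0 t10 t20))).
    have -> : x1 + x2 + (t1 + t2) *: y = (x1 + t1 *: y) + (x2 + t2 *: y).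
      by rewrite scalerDl addrACA.
    have := hp.1 (x1 + t1 *: y) (x2 + t2 *: y); lra.
  have : shift p y (x1 + x2) - shift p y x1 <= shift p y x2.
    apply: shift_ge => // t2 t20.
    suff : shift p y (x1 + x2) - (p (x2 + t2 *: y) - t2 * p y) <= shift p y x1 by lra.
    apply: shift_ge => // t1 t10.
    have := h t1 t2 t10 t20; lra.
  lra.
- move=> s x s0; apply/eqP; rewrite eq_le; apply/andP; split.
  + have : shift p y (s *: x) / s <= shift p y x.
      apply: shift_ge => // t t0; rewrite ler_pdivrMr //.
      apply: le_trans (shift_le y (s *: x) hp (mulr_ge0 (ltW s0) t0)) _.
      rewrite -scalerA -scalerDr sublinZ ?(ltW s0) //.
      apply: eqle; ring.
    by rewrite ler_pdivrMr // mulrC.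
  + apply: shift_ge => // t t0.
    have st0 : 0 <= t / s by rewrite divr_ge0 // ltW.
    have h := shift_le y x hp st0.
    have e : s * p (x + (t / s) *: y) = p (s *: x + t *: y).
      by rewrite -sublinZ ?(ltW s0) // scalerDr scalerA mulrCA mulfV ?gt_eqF // mulr1.
    have e2 : s * (t / s) = t by rewrite mulrCA mulfV ?gt_eqF // mulr1.
    apply: le_trans (ler_wpM2l (ltW s0) h) _.
    by rewrite mulrBr e mulrA e2.
Qed.

Lemma shift_le_p p y x : sublin p -> shift p y x <= p x.
Proof. by move=> hp; have := shift_le y x hp (lexx 0); rewrite scale0r addr0 mul0r subr0. Qed.

Lemma shift_neg p y : sublin p -> shift p y (- y) <= - p y.
Proof. by move=> hp; have := shift_le y (- y) hp ler01; rewrite scale1r addNr sublin0 // mul1r sub0r. Qed.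

Definition linear_fun (L : E -> R) := (forall x y, L (x + y) = L x + L y) /\
  (forall (t : R) x, L (t *: x) = t * L x).

Lemma minimal_linear p : sublin p -> exists q, sublin q /\
  (forall x, q x <= p x) /\ (forall x y, q (x + y) = q x + q y).
Proof.
move=> hp.
pose T := {q : E -> R | sublin q /\ forall x, q x <= p x}.
pose Rl (a b : T) := `[< forall x, sval b x <= sval a x >].
have [t tmax] : exists t : T, forall s, Rl t s -> s = t.
  apply: (@Zorn T Rl).
  - by move=> a; apply/asboolP.
  - move=> a b c /asboolP hab /asboolP hbc; apply/asboolP => x.
    exact: le_trans (hbc x) (hab x).
  - move=> [a ha] [b hb] /asboolP /= hab /asboolP /= hba; apply: eq_exist.
    by apply/funext => x; apply/eqP; rewrite eq_le hab hba.
  - move=> A Atot.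
    case: (pselect (A !=set0)) => [[a0 Aa0]|An0]; last first.
      by exists (exist _ p (conj hp (fun x => lexx _))) => s As; exfalso; apply: An0; exists s.
    pose m x := inf [set sval a x | a in A].
    have mlb : forall a x, A a -> m x <= sval a x.
      move=> a x Aa; apply: (@inf_le_img _ _ _ (- p (- x))) => // b Ab.
      case: (svalP b) => hb hbp; apply: le_trans (sublinN _ hb).
      by rewrite lerN2; exact: hbp.
    have mge : forall x z, (forall a, A a -> z <= sval a x) -> z <= m x.
      by move=> x z h; apply: inf_ge_img => //; exists a0.
    have msub : sublin m.
      split.
      - move=> x y.
        have h : forall a b, A a -> A b -> m (x + y) <= sval a x + sval b y.
          move=> a b Aa Ab; case: (svalP a) => ha _; case: (svalP b) => hb _.
          case: (Atot a b Aa Ab) => /asboolP hab.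
          + apply: le_trans (mlb b _ Ab) _; apply: le_trans (hb.1 x y) _.
            by rewrite lerD2r.
          + apply: le_trans (mlb a _ Aa) _; apply: le_trans (ha.1 x y) _.
            by rewrite lerD2l.
        have : m (x + y) - m x <= m y.
          apply: (mge) => b Ab.
          suff : m (x + y) - sval b y <= m x by lra.
          apply: (mge) => a Aa; have := h a b Aa Ab; lra.
        lra.
      - move=> s x s0; apply/eqP; rewrite eq_le; apply/andP; split.
        + have : m (s *: x) / s <= m x.
            apply: (mge) => a Aa; rewrite ler_pdivrMr //.
            apply: le_trans (mlb a _ Aa) _.
            by case: (svalP a) => ha _; rewrite ha.2 // mulrC.
          by rewrite ler_pdivrMr // mulrC.
        + apply: (mge) => a Aa; case: (svalP a) => ha _.
          by rewrite ha.2 // ler_pM2l //; exact: mlb.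
    have mp : forall x, m x <= p x.
      by move=> x; apply: le_trans (mlb a0 x Aa0) _; case: (svalP a0) => _; apply.
    by exists (exist _ m (conj msub mp)) => s As; apply/asboolP => x /=; exact: mlb.
exists (sval t); case: (svalP t) => ht htp; split => //; split => //.
move=> x y.
have hs : sublin (shift (sval t) y) := shift_sublin y ht.
have hsp : forall x, shift (sval t) y x <= p x.
  by move=> z; apply: le_trans (shift_le_p _ _ ht) (htp z).
have Rlt : Rl t (exist _ _ (conj hs hsp)).
  by apply/asboolP => z /=; exact: shift_le_p.
have /(congr1 sval) /= eq := tmax _ Rlt.
have h1 := shift_le y x ht ler01; rewrite scale1r mul1r eq in h1.
have := ht.1 x y; lra.
Qed.

Lemma HB_sublin p x0 : sublin p -> exists L, linear_fun L /\
  (forall x, L x <= p x) /\ p x0 <= L x0.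
Proof.
move=> hp; have hp1 := shift_sublin x0 hp.
have [q [hq [hqp hqadd]]] := minimal_linear hp1.
have q0 : q 0 = 0 := sublin0 hq.
have qN : forall x, q (- x) = - q x.
  by move=> x; have := hqadd x (- x); rewrite subrr q0; lra.
exists q; split; [split => // t x|split].
- case: (ltrgtP t 0) => [tn|tp|->].
  + have -> : t *: x = - ((- t) *: x) by rewrite scaleNr opprK.
    by rewrite qN (hq.2 (- t) x) ?oppr_gt0 // mulNr opprK.
  + exact: hq.2.
  + by rewrite scale0r q0 mul0r.
- by move=> x; exact: le_trans (hqp x) (shift_le_p _ _ hp).
- have := hqp (- x0); have := shift_neg x0 hp; rewrite qN; lra.
Qed.

Definition cvx (W : set E) := forall x y, W x -> W y ->
  forall t : R, 0 <= t <= 1 -> W (t *: x + (1 - t) *: y).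

Lemma HB_gauge (W : set E) w0 : cvx W -> W 0 ->
  (forall e, exists2 d : R, 0 < d & W (d *: e)) -> ~ W w0 ->
  exists L, linear_fun L /\ (forall w, W w -> L w <= 1) /\ 1 <= L w0.
Proof.
move=> cW W0 abs nW.
pose S e := [set t : R | 0 < t /\ W (t^-1 *: e)].
pose g e := inf (S e).
have Sne : forall e, S e !=set0.
  move=> e; have [d d0 Wd] := abs e; exists d^-1; split; first by rewrite invr_gt0.
  by rewrite invrK.
have Slb : forall e, has_lbound (S e).
  by move=> e; exists 0 => t [t0 _]; exact: ltW.
have gle : forall e t, S e t -> g e <= t by move=> e t; exact: ge_inf.
have gge : forall e z, (forall t, S e t -> z <= t) -> z <= g e.
  by move=> e z; exact: lb_le_inf.
have hg : sublin g.
  split.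
  - move=> x y.
    have h : forall t1 t2, S x t1 -> S y t2 -> g (x + y) <= t1 + t2.
      move=> t1 t2 [t10 Wx] [t20 Wy]; apply: (gle); split; first exact: addr_gt0.
      have t12 : 0 < t1 + t2 by exact: addr_gt0.
      have c01 : 0 <= t1 / (t1 + t2) <= 1.
        apply/andP; split; first by rewrite divr_ge0 // ltW.
        by rewrite ler_pdivrMr // mul1r lerDl ltW.
      have := cW _ _ Wx Wy _ c01; rewrite !scalerA.
      have -> : t1 / (t1 + t2) * t1^-1 = (t1 + t2)^-1.
        by field; apply/andP; split; rewrite gt_eqF.
      have -> : (1 - t1 / (t1 + t2)) * t2^-1 = (t1 + t2)^-1.
        by field; apply/andP; split; rewrite gt_eqF.
      by rewrite scalerDr.
    have : g (x + y) - g x <= g y.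
      apply: (gge) => t2 S2.
      suff : g (x + y) - t2 <= g x by lra.
      apply: (gge) => t1 S1; have := h t1 t2 S1 S2; lra.
    lra.
  - move=> s x s0; apply/eqP; rewrite eq_le; apply/andP; split.
    + have : g (s *: x) / s <= g x.
        apply: (gge) => t [t0 Wt]; rewrite ler_pdivrMr //.
        apply: (gle); split; first exact: mulr_gt0.
        rewrite scalerA (_ : (t * s)^-1 * s = t^-1) //.
        by field; apply/andP; split; rewrite gt_eqF.
      by rewrite ler_pdivrMr // mulrC.
    + suff : g x * s <= g (s *: x) by rewrite mulrC.
      apply: (gge) => t [t0 Wt]; rewrite -ler_pdivlMr //.
      apply: (gle); split; first exact: divr_gt0.
      move: Wt; rewrite scalerA (_ : t^-1 * s = (t / s)^-1) //.
      by field; apply/andP; split; rewrite gt_eqF.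
have g1 : forall w, W w -> g w <= 1.
  by move=> w Ww; apply: (gle); split; [exact: ltr01|rewrite invr1 scale1r].
have gw0 : 1 <= g w0.
  rewrite leNgt; apply/negP => /(inf_lt (Sne w0))[t [t0 Wt] t1].
  apply: nW; have := cW _ _ Wt W0 t; rewrite scalerA mulfV ?gt_eqF // scale1r.
  rewrite scaler0 addr0; apply; apply/andP; split; exact: ltW.
have [L [hL [hLg hL0]]] := HB_sublin w0 hg.
exists L; split => //; split.
- by move=> w Ww; apply: le_trans (hLg w) (g1 w Ww).
- exact: le_trans gw0 hL0.
Qed.

End HBsec.
Section Topo.
Context {R : realType} {X : tvsType R}.

Lemma aff_cont (a : X) (k : R) : continuous (fun v : X => a + k *: v).
Proof.
move=> v.
have hs : {for v, continuous (fun v : X => k *: v)}.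
  apply: (@continuous_comp X (R^o * X)%type X (fun v => (k, v)) (fun z => z.1 *: z.2)); last exact: scale_continuous.
  by apply: (@cvg_pair _ _ _ _ (nbhs (k : R^o))); [exact: cvg_cst|exact: cvg_id].
apply: (@continuous_comp X (X * X)%type X (fun v => (a, k *: v)) (fun z => z.1 + z.2)); last exact: add_continuous.
by apply: (@cvg_pair _ _ _ _ (nbhs a)); [exact: cvg_cst|exact: hs].
Qed.

Lemma open_aff (A : set X) (a : X) (k : R) : open A -> open [set w | A (a + k *: w)].
Proof. by move=> oA; apply: (@open_comp _ _ (fun w => a + k *: w)) => // w _; exact: aff_cont. Qed.

Lemma line_cont (x d : X) : continuous (fun s : R^o => x + s *: d).
Proof.
move=> s.
have hs : {for s, continuous (fun s : R^o => s *: d)}.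
  apply: (@continuous_comp R^o (R^o * X)%type X (fun s => (s, d)) (fun z => z.1 *: z.2)); last exact: scale_continuous.
  by apply: (@cvg_pair _ _ _ _ (nbhs (s : R^o))); [exact: cvg_id|exact: cvg_cst].
apply: (@continuous_comp R^o (X * X)%type X (fun s => (x, s *: d)) (fun z => z.1 + z.2)); last exact: add_continuous.
by apply: (@cvg_pair _ _ _ _ (nbhs x)); [exact: cvg_cst|exact: hs].
Qed.

Lemma seg_open (V : set X) x d : open V -> V x ->
  exists2 s0 : R, 0 < s0 & forall s, 0 <= s <= s0 -> V (x + s *: d).
Proof.
move=> oV Vx.
have : nbhs (0 : R^o) [set s : R^o | V (x + s *: d)].
  have hV : nbhs (x + (0 : R^o) *: d) V.
    by rewrite scale0r addr0; apply: open_nbhs_nbhs; split.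
  by move: (@line_cont x d 0 _ hV); apply: filterS.
move=> /nbhs_ballP [e e0 he]; exists (e / 2); first by rewrite divr_gt0.
move=> s /andP[s0 s1]; apply: he; rewrite -ball_normE /= sub0r normrN ger0_norm //.
by apply: le_lt_trans s1 _; rewrite ltr_pdivrMr // ltr_pMr // ltr1n.
Qed.

Lemma cvx_nbhs (A : set X) x : nbhs x A ->
  exists B, [/\ open B, B x, cvx B & B `<=` A].
Proof.
move=> hA; have [Bs Bcvx [Bopen Bbasis]] := @locally_convex R X.
have [U [BsU Ux] UA] := Bbasis x A hA.
exists U; split => //; first exact: Bopen.
move=> a b Ua Ub t /andP[t0 t1].
have hc := Bcvx U (mem_set BsU).
have := hc a b (Itv01 t0 t1) (mem_set Ua) (mem_set Ub).
by move/set_mem.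
Qed.

End Topo.
Section Mono.
Context {R : realType} {X : tvsType R}.
Local Notation Z := (X * (X -> R))%type.
Implicit Types (z w u v : Z) (S T : set Z) (f g : X -> R) (x y : X) (a b t : R).

Definition qq (z u : Z) : R := z.2 z.1 - z.2 u.1 - u.2 z.1 + u.2 u.1.
Definition term (z u : Z) : R := u.2 z.1 + z.2 u.1 - u.2 u.1.

Lemma termE z u : term z u = coupling z - qq z u.
Proof. rewrite /term /qq /coupling; lra. Qed.

Lemma qqC z u : qq z u = qq u z.
Proof. rewrite /qq; lra. Qed.

Lemma phi_ub S z u : S u -> ((term z u)%:E <= phi S z)%E.
Proof. by move=> Su; apply: ereal_sup_ubound; exists u. Qed.

Lemma phi_le S z (r : R) : (forall u, S u -> term z u <= r) -> (phi S z <= r%:E)%E.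
Proof. by move=> h; apply: ge_ereal_sup => _ [u Su <-]; rewrite lee_fin; exact: h. Qed.

Lemma phi_leP S z (r : R) : (phi S z <= r%:E)%E -> forall u, S u -> term z u <= r.
Proof. by move=> h u Su; rewrite -lee_fin; exact: le_trans (phi_ub z Su) h. Qed.

Lemma phi_gtP S z (r : R) : (r%:E < phi S z)%E -> exists2 u, S u & r < term z u.
Proof.
move=> h; apply: contrapT => hn.
have : (phi S z <= r%:E)%E.
  apply: phi_le => u Su; rewrite leNgt; apply/negP => hlt; apply: hn; by exists u.
by rewrite leNgt h.
Qed.

Lemma phi_mono S S' z : S `<=` S' -> (phi S z <= phi S' z)%E.
Proof. by move=> SS'; apply: ereal_sup_le => _ [u Su <-]; exists u => //; exact: SS'. Qed.

Lemma NI_contra S w (d : R) : ((coupling w)%:E <= phi S w)%E -> 0 < d ->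
  (forall u, S u -> d <= qq w u) -> False.
Proof.
move=> hw d0 hd.
have : (phi S w <= (coupling w - d)%:E)%E.
  by apply: phi_le => u Su; rewrite termE; have := hd u Su; lra.
move=> h2; have := le_trans hw h2; rewrite lee_fin; lra.
Qed.

Lemma dual_add f x y : dual f -> f (x + y) = f x + f y.
Proof. by move=> [hf _]; have := hf 1 x y; rewrite scale1r mul1r. Qed.

Lemma dual0 f : dual f -> f 0 = 0.
Proof. by move=> hf; have := dual_add 0 0 hf; rewrite addr0; lra. Qed.

Lemma dualZ f a x : dual f -> f (a *: x) = a * f x.
Proof. by move=> hf; have := hf.1 a x 0; rewrite addr0 dual0 // addr0. Qed.

Lemma dualN f x : dual f -> f (- x) = - f x.
Proof. by move=> hf; rewrite -scaleN1r dualZ // mulN1r. Qed.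

Lemma dualB f x y : dual f -> f (x - y) = f x - f y.
Proof. by move=> hf; rewrite dual_add // dualN. Qed.

Lemma dual2 f a b x y : dual f -> f (a *: x + b *: y) = a * f x + b * f y.
Proof. by move=> hf; rewrite dual_add // !dualZ. Qed.

Lemma dual_comb f g (a b : R) : dual f -> dual g -> dual (fun x => a * f x + b * g x).
Proof.
move=> hf hg; split.
  by move=> t x y; rewrite !dual_add // !dualZ //; ring.
move=> x.
have h1 := @cvgMl_tmp _ _ _ _ _ a _ (hf.2 x).
have h2 := @cvgMl_tmp _ _ _ _ _ b _ (hg.2 x).
exact: (@cvgD R R^o X (nbhs x) _ (fun y => a * f y) (fun y => b * g y) _ _ (h1 (nbhs_filter x)) (h2 (nbhs_filter x))).
Qed.

Lemma Zd_comb t z w : Zd z -> Zd w -> Zd (zcomb t z w).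
Proof. by move=> hz hw; apply: dual_comb. Qed.

Lemma qq_comb t z w u : Zd z -> Zd w -> Zd u ->
  qq (zcomb t z w) u = t * qq z u + (1 - t) * qq w u - t * (1 - t) * qq z w.
Proof.
move=> hz hw hu; rewrite /qq /zcomb /= !dual2 //; ring.
Qed.

End Mono.
Section Sep.
Context {R : realType} {X : tvsType R}.

Lemma lin_neg (L : X -> R) x : linear_fun L -> L (- x) = - L x.
Proof. by move=> [_ hZ]; rewrite -scaleN1r hZ mulN1r. Qed.

Lemma lin_cont (L : X -> R) (W : set X) : linear_fun L -> nbhs 0 W ->
  (forall w, W w -> L w <= 1) -> dual L.
Proof.
move=> hLin hW hL; have [hadd hZ] := hLin; split.
  by move=> a x y; rewrite hadd hZ.
pose N := W `&` [set w | W (- w)].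
have hN : nbhs 0 N.
  apply: filterI => //.
  have h : nbhs (0 + (-1 : R) *: (0 : X)) W by rewrite scaler0 addr0.
  have h2 : nbhs 0 [set v | W (0 + (-1 : R) *: v)] := @aff_cont R X 0 (-1) 0 _ h.
  by apply: filterS h2 => w /=; rewrite add0r scaleN1r.
have Nb : forall w, N w -> `|L w| <= 1.
  move=> w [Ww Wmw]; rewrite ler_norml; apply/andP; split.
    by have := hL _ Wmw; rewrite lin_neg //; lra.
  exact: hL.
move=> x; apply/cvgrPdist_lt => e e0.
pose k := 2 / e.
have k0 : 0 < k by rewrite /k divr_gt0.
have h : nbhs (- (k *: x) + k *: x) N by rewrite addNr.
have h2 : nbhs x [set v | N (- (k *: x) + k *: v)] := @aff_cont R X (- (k *: x)) k x _ h.
apply: filterS h2 => v /= Nv.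
have := Nb _ Nv; rewrite hadd lin_neg // !hZ.
have -> : - (k * L x) + k * L v = k * (L v - L x) by ring.
rewrite normrM (gtr0_norm k0) -ler_pdivlMl // => h1.
rewrite distrC; apply: le_lt_trans h1 _.
rewrite /k invf_div mulr1 ltr_pdivrMr // ltr_pMr // ltr1n //.
Qed.

Lemma sep_point : hausdorff_space X -> forall d : X, d != 0 ->
  exists g, dual g /\ 1 <= g d.
Proof.
move=> hX d d0.
have [A [B [hA [hB hAB]]]] : exists A B, nbhs 0 A /\ nbhs d B /\ ~ (A `&` B !=set0).
  apply: contrapT => hn; move/eqP: d0; apply; apply/esym; apply: hX => A B hA hB.
  apply: contrapT => hn2; apply: hn; by exists A, B.
have nAd : ~ A d by move=> Ad; apply: hAB; exists d; split => //; exact: nbhs_singleton.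
have [W [oW W0 cW WA]] := cvx_nbhs hA.
have abs : forall e, exists2 t : R, 0 < t & W (t *: e).
  move=> e; have [s0 s00 hs] := @seg_open R X W 0 e oW W0.
  exists s0 => //; have := hs s0; rewrite add0r; apply; rewrite lexx andbT; exact: ltW.
have [L [hL [hLW hLd]]] := HB_gauge cW W0 abs (fun Wd => nAd (WA _ Wd)).
exists L; split => //; apply: (lin_cont hL _ hLW).
by apply: open_nbhs_nbhs; split.
Qed.

End Sep.
Section Main.
Context {R : realType} {X : tvsType R}.
Local Notation Z := (X * (X -> R))%type.
Implicit Types (z w u v : Z) (S T : set Z) (f g : X -> R) (x y : X).

Lemma Mchar T z : set_phi_le_c T z <-> Zd z /\ forall u, T u -> 0 <= qq z u.
Proof.
split.
  move=> [hz hp]; split => // u Tu; have := phi_leP hp Tu; rewrite termE; lra.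
move=> [hz h]; split => //; apply: phi_le => u Tu; rewrite termE; have := h u Tu; lra.
Qed.

Lemma NI_global T : MX T -> locally_NI T -> forall w, Zd w -> ((coupling w)%:E <= phi T w)%E.
Proof.
move=> [_ [[[y ys] Tu] _]] hNI.
have oc : open_convex (@setT X) by split; [exact: openT|by []].
have ne : setT `&` dom T !=set0 by exists y; split => //; exists ys.
move=> w hw; apply: le_trans (hNI _ oc ne w hw I) _; apply: phi_mono => v [] //.
Qed.

Lemma M_mono T : MX T -> locally_NI T -> monotone_op (set_phi_le_c T).
Proof.
move=> hT hNI z w /Mchar [hz Hz] /Mchar [hw Hw].
have [Top _] := hT.
change (0 <= qq z w); rewrite leNgt; apply/negP => hlt.
have Zm := Zd_comb (1/2) hz hw.
apply: (NI_contra (NI_global hT hNI Zm)) (_ : 0 < - qq z w / 4) _.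
  by rewrite divr_gt0 // oppr_gt0.
move=> u Tu; rewrite qq_comb //; last exact: Top.
have := Hz u Tu; have := Hw u Tu; lra.
Qed.

Lemma T_sub_M T : MX T -> T `<=` set_phi_le_c T.
Proof.
move=> [Top [_ Tmon]] u Tu; apply/Mchar; split; first exact: Top.
by move=> v Tv; exact: Tmon.
Qed.

Lemma comb3 (x0 a1 a2 b1 b2 : X) (t : R) :
  t *: (x0 + (a1 + b1)) + (1 - t) *: (x0 + (a2 + b2)) =
  x0 + ((t *: a1 + (1 - t) *: a2) + (t *: b1 + (1 - t) *: b2)).
Proof.
rewrite !scalerDr addrACA -scalerDl (_ : t + (1 - t) = 1); last by ring.
by rewrite scale1r; congr (x0 + _); rewrite addrACA.
Qed.

Lemma seg_eq (x y : X) (s : R) : (1 - s) *: x + (1 - (1 - s)) *: y = x + s *: (y - x).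
Proof.
rewrite (_ : 1 - (1 - s) = s); last by ring.
by rewrite scalerBl scale1r scalerBr addrA addrAC.
Qed.

Lemma domT T (hX : hausdorff_space X) : MX T -> locally_NI T -> forall V,
  open_convex V -> V `&` dom (set_phi_le_c T) !=set0 -> V `&` dom T !=set0.
Proof.
move=> hT hNI V [oV cV] [x0 [Vx0 [x0s Mz0]]].
apply: contrapT => nVT.
have [Top [[[y ys] Tu] Tmon]] := hT.
have [hz0 Hz0] := (Mchar T _).1 Mz0.
have yV : ~ V y by move=> Vy; apply: nVT; exists y; split => //; exists ys.
pose d := y - x0.
have d0 : d != 0.
  apply/eqP => hd; apply: yV; suff -> : y = x0 by [].
  by apply/eqP; rewrite -subr_eq0; apply/eqP.
have [g [hg gd]] := sep_point hX d0.
have [s1 s10 hs1] := @seg_open R X V x0 d oV Vx0.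
pose s0 := s1 / 2.
have s00 : 0 < s0 by rewrite divr_gt0.
pose N := [set n : X | V (x0 + 2 *: n) /\ `|g n| < s0 / 2].
have N0 : N 0 by split; [rewrite scaler0 addr0|rewrite dual0 // normr0 divr_gt0].
have oN : open N.
  apply: openI; first exact: open_aff.
  rewrite openE => n hn; rewrite /interior.
  have := hg.2 n; move/cvgrPdist_lt => /(_ (s0 / 2 - `|g n|)).
  rewrite subr_gt0 => /(_ hn); apply: filterS => m /= hm.
  have t := ler_normD (g n) (g m - g n); rewrite addrC subrK in t.
  rewrite distrC in hm; lra.
have cN : cvx N.
  move=> a b [Va ga] [Vb gb] t /andP[t0 t1]; split.
    have := cV _ _ Va Vb t; rewrite t0 t1 => /(_ isT).
    congr V; rewrite !scalerDr !scalerA [2 * t]mulrC [2 * (1 - t)]mulrC -!scalerA.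
    rewrite addrACA -scalerDl (_ : t + (1 - t) = 1); last by ring.
    by rewrite scale1r.
  rewrite dual2 //.
  apply: le_lt_trans (ler_normD _ _) _; rewrite !normrM (ger0_norm t0).
  rewrite (ger0_norm (_ : 0 <= 1 - t)); last by lra.
  have [->|tp] := eqVneq t 0; first by rewrite mul0r add0r subr0 mul1r.
  have tp' : 0 < t by rewrite lt_neqAle eq_sym tp t0.
  have h2 : t * `|g a| < t * (s0 / 2) by rewrite ltr_pM2l.
  have h1 : (1 - t) * `|g b| <= (1 - t) * (s0 / 2).
    by rewrite ler_wpM2l ?(ltW gb) //; lra.
  lra.
pose V' := [set v : X | exists s n, (0 <= s <= 1) /\ N n /\ v = x0 + (s *: d + n)].
have oV' : open V'.
  rewrite openE => _ [s [n [hs [Nn ->]]]]; rewrite /interior.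
  have h : nbhs (- (x0 + s *: d) + 1 *: (x0 + (s *: d + n))) N.
    by rewrite scale1r (addrA x0) addKr; apply: open_nbhs_nbhs; split.
  have h2 : nbhs (x0 + (s *: d + n)) [set w | N (- (x0 + s *: d) + 1 *: w)] :=
    @aff_cont R X _ _ _ _ h.
  apply: filterS h2 => w /= Nw; exists s, (- (x0 + s *: d) + 1 *: w).
  by split => //; split => //; rewrite scale1r (addrA x0) addNKr.
have cV' : convex_set_X V'.
  move=> _ _ [s1' [n1 [hs1' [Nn1 ->]]]] [s2' [n2 [hs2' [Nn2 ->]]]] t /andP[t0 t1].
  exists (t * s1' + (1 - t) * s2'), (t *: n1 + (1 - t) *: n2).
  move: hs1' hs2' => /andP[a0 a1] /andP[b0 b1].
  split; last split.
  - have h1 := mulr_ge0 t0 a0; have h2 := mulr_ge0 (_ : 0 <= 1 - t) b0.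
    have h3 := ler_wpM2l t0 a1; have h4 := ler_wpM2l (_ : 0 <= 1 - t) b1.
    apply/andP; split.
      by have := h2 ltac:(lra); lra.
    by have := h4 ltac:(lra); lra.
  - by apply: cN => //; rewrite t0 t1.
  - by rewrite comb3 !scalerA -scalerDl.
have yV' : V' y.
  exists 1, 0; split; first by rewrite ler01 lexx.
  by split => //; rewrite scale1r addr0 /d addrC subrK.
have hNIV' := hNI V' (conj oV' cV') (ex_intro _ y (conj yV' (ex_intro _ ys Tu))).
pose w : Z := (x0, fun a => 1 * x0s a + (-1) * g a).
have Zw : Zd w := dual_comb 1 (-1) hz0 hg.
have V'x0 : V' x0.
  by exists 0, 0; split; [rewrite lexx ler01|split => //; rewrite scale0r !addr0].
apply: (NI_contra (hNIV' w Zw V'x0)) (_ : 0 < s0 / 2) _; first by rewrite divr_gt0.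
move=> [v1 v2] [Tv /= [s [n [/andP[hs0 hs1'] [Nn hv]]]]].
have hqq : qq w (v1, v2) = qq (x0, x0s) (v1, v2) - g x0 + g v1 by rewrite /qq /=; lra.
rewrite hqq.
have q0 := Hz0 _ Tv.
have ss0 : s0 < s.
  rewrite ltNge; apply/negP => hss; apply: nVT; exists v1; split; last by exists v2.
  have Va : V (x0 + (2 * s) *: d) by apply: hs1; apply/andP; split; [|rewrite /s0 in hss]; lra.
  have h12 : (0 <= 2^-1 :> R) && (2^-1 <= 1 :> R) by apply/andP; split; lra.
  have := cV _ _ Va Nn.1 (2^-1) h12.
  congr V; rewrite hv !scalerDr !scalerA.
  rewrite (_ : 2^-1 * (2 * s) = s); last by field.
  rewrite (_ : (1 - 2^-1) * 2 = 1); last by field.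
  rewrite scale1r addrACA -scalerDl (_ : 2^-1 + (1 - 2^-1) = 1); last by ring.
  by rewrite scale1r.
have gv1 : g v1 = g x0 + s * g d + g n.
  by rewrite hv (dual_add _ _ hg) (dual_add _ _ hg) (dualZ _ _ hg) addrA.
rewrite gv1.
have h1 : s <= s * g d by rewrite -{1}(mulr1 s) ler_wpM2l // ltW // (lt_trans s00).
have h2 : - (s0 / 2) < g n by have := Nn.2; rewrite ltr_norml => /andP[].
lra.
Qed.

End Main.
Section Main2.
Context {R : realType} {X : tvsType R}.
Local Notation Z := (X * (X -> R))%type.
Implicit Types (z w u v : Z) (S T : set Z) (f g : X -> R) (x y : X).

Lemma ident_M T (hX : hausdorff_space X) : MX T -> locally_NI T ->
  identifiable (set_phi_le_c T).
Proof.
move=> hT hNI V [oV cV] hVM z [hz [Vz hphi]].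
have [Top [_ Tmon]] := hT.
have [x1 [Vx1 hx1]] := domT hX hT hNI (conj oV cV) hVM.
have hNIV := hNI V (conj oV cV) (ex_intro _ x1 (conj Vx1 hx1)).
apply/Mchar; split => // u Tu.
rewrite leNgt; apply/negP => hlt.
have Zu := Top u Tu.
have [s1 s10 hs1] := @seg_open R X V z.1 (u.1 - z.1) oV Vz.
pose s := Num.min s1 (1/2).
have s0 : 0 < s by rewrite lt_min s10 /=; lra.
have ss1 : s <= s1 by rewrite ge_min lexx.
have s12 : s <= 1/2 by rewrite ge_min lexx orbT.
pose w := zcomb (1 - s) z u.
have Vw : V w.1 by rewrite /w /zcomb /= seg_eq; apply: hs1; rewrite ss1 ltW.
have dpos : 0 < ((1 - s) * s) * (- qq z u).
  by apply: mulr_gt0; [apply: mulr_gt0 => //; lra|rewrite oppr_gt0].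
apply: (NI_contra (hNIV w (Zd_comb _ hz Zu) Vw)) dpos _.
move=> v [Tv Vv]; have Zv := Top v Tv.
rewrite qq_comb // (_ : 1 - (1 - s) = s); last by ring.
have h1 : 0 <= qq z v.
  have := phi_leP hphi (conj (T_sub_M hT Tv) Vv); rewrite termE; lra.
have h2 : 0 <= qq u v := Tmon u v Tu Tv.
have h3 := mulr_ge0 (_ : 0 <= 1 - s) h1; have h4 := mulr_ge0 (ltW s0) h2.
have := h3 ltac:(lra); lra.
Qed.

Lemma uniq_M T : MX T -> locally_NI T -> forall S, MX S -> T `<=` S ->
  identifiable S -> S = set_phi_le_c T.
Proof.
move=> hT hNI S [Sop [[s0 Ss0] Smon]] TS hid.
have SM : S `<=` set_phi_le_c T.
  move=> z Sz; apply/Mchar; split; first exact: Sop.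
  by move=> u Tu; exact: Smon z u Sz (TS u Tu).
apply/seteqP; split => // z Mz.
have oc : open_convex (@setT X) by split; [exact: openT|by []].
have ne : setT `&` dom S !=set0 by exists s0.1; split => //; exists s0.2; case: s0 Ss0.
apply: (hid setT oc ne); split; first by case: Mz.
split => //; apply: phi_le => u [Su _]; rewrite termE.
have := M_mono hT hNI Mz (SM u Su); change (0 <= qq z u -> coupling z - qq z u <= coupling z).
lra.
Qed.

Lemma phi_lsc T : MX T -> lsc_Z (phi T).
Proof.
move=> [Top _] z hz r /phi_gtP [u Tu hu].
pose e := (term z u - r) / 2.
have e0 : 0 < e by rewrite divr_gt0 // subr_gt0.
exists [set y | `|u.2 z.1 - u.2 y| < e]; split.
  by have := (Top u Tu).2 z.1; move/cvgrPdist_lt => /(_ e e0).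
exists [:: u.1], e; split => // y g hy hg hxs.
apply: lt_le_trans (phi_ub _ Tu); rewrite lte_fin.
have := hxs u.1 (mem_head _ _); move: hy; rewrite /term /= => h1 h2.
have := ltr_norml (u.2 z.1 - u.2 y) e; rewrite h1 => /esym /andP[_ h3].
have := ltr_norml (g u.1 - z.2 u.1) e; rewrite h2 => /esym /andP[h4 _].
have he : 2 * e = term z u - r by rewrite /e; field.
move: he; rewrite /term; lra.
Qed.

Lemma phi_cvx T : MX T -> convex_fun_Z (phi T).
Proof.
move=> [Top _] z w hz hw a b ha hb t /andP[t0 t1].
apply: phi_le => u Tu.
have Zu := Top u Tu.
have -> : term (zcomb t z w) u = t * term z u + (1 - t) * term w u.
  by rewrite /term /zcomb /= dual2 //; ring.
have h1 := ler_wpM2l t0 (phi_leP ha Tu).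
have h2 := ler_wpM2l (_ : 0 <= 1 - t) (phi_leP hb Tu).
have := h2 ltac:(lra); lra.
Qed.

Lemma phi_cind T : MX T -> forall w, Zd w -> (phi T w <= c_plus_ind T w)%E.
Proof.
move=> [Top [_ Tmon]] w hw; rewrite /c_plus_ind; case: asboolP => [Tw|_]; last exact: leey.
apply: phi_le => u Tu; rewrite termE; have := Tmon w u Tw Tu.
change (0 <= qq w u -> coupling w - qq w u <= coupling w); lra.
Qed.

Lemma phi_le_psi T : MX T -> forall z, (phi T z <= psi T z)%E.
Proof.
move=> hT z; apply: ereal_sup_ubound; exists (phi T) => //; split; first exact: phi_lsc.
by split; [exact: phi_cvx|exact: phi_cind].
Qed.

End Main2.
Section PairHelp.
Context {R : realType} {M1 M2 : lmodType R}.
Implicit Types (x y : (M1 * M2)%type).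
Lemma pD1 x y : (x + y).1 = x.1 + y.1. Proof. by []. Qed.
Lemma pD2 x y : (x + y).2 = x.2 + y.2. Proof. by []. Qed.
Lemma pN1 x : (- x).1 = - x.1. Proof. by []. Qed.
Lemma pN2 x : (- x).2 = - x.2. Proof. by []. Qed.
Lemma pZ1 (t : R) x : (t *: x).1 = t *: x.1. Proof. by []. Qed.
Lemma pZ2 (t : R) x : (t *: x).2 = t *: x.2. Proof. by []. Qed.
Lemma p01 : (0 : M1 * M2).1 = 0. Proof. by []. Qed.
Lemma p02 : (0 : M1 * M2).2 = 0. Proof. by []. Qed.
Lemma pext x y : x.1 = y.1 -> x.2 = y.2 -> x = y.
Proof. by case: x => ? ?; case: y => ? ? /= -> ->. Qed.
End PairHelp.

Section RealHelp.
Context {R : realType}.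
Lemma scaleRo (t s : R) : t *: (s : R^o) = t * s. Proof. by []. Qed.

Lemma conv_lt (a b m t : R) : 0 <= t <= 1 -> a < m -> b < m -> t * a + (1 - t) * b < m.
Proof.
move=> /andP[t0 t1] am bm.
have [->|tp] := eqVneq t 0; first by rewrite mul0r add0r subr0 mul1r.
have tp' : 0 < t by rewrite lt_neqAle eq_sym tp t0.
have h1 : t * a < t * m by rewrite ltr_pM2l.
have h2 : (1 - t) * b <= (1 - t) * m by rewrite ler_wpM2l ?(ltW bm) //; lra.
lra.
Qed.

Lemma conv_norm (a b t : R) : 0 <= t <= 1 -> `|t * a + (1 - t) * b| <= t * `|a| + (1 - t) * `|b|.
Proof.
move=> /andP[t0 t1]; apply: le_trans (ler_normD _ _) _.
by rewrite !normrM (ger0_norm t0) (ger0_norm (_ : 0 <= 1 - t)) //; lra.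
Qed.
End RealHelp.

Section LmodHelp.
Context {R : realType} {E : lmodType R}.
Lemma combW (o1 c1 o2 c2 w0 : E) (t : R) :
  t *: (o1 - c1 + w0) + (1 - t) *: (o2 - c2 + w0) =
  (t *: o1 + (1 - t) *: o2) - (t *: c1 + (1 - t) *: c2) + w0.
Proof.
rewrite !scalerDr !scalerN addrACA -scalerDl (_ : t + (1 - t) = 1); last by ring.
by rewrite scale1r addrACA opprD.
Qed.
End LmodHelp.
Section Psi.
Context {R : realType} {X : tvsType R}.
Local Notation Z := (X * (X -> R))%type.
Local Notation EE n := (X * 'rV[R]_n * R^o)%type.

Lemma lam0_aux (A hz ls' : R) : A <= `|A| -> hz + ls' <= A -> - hz <= `|hz| ->
  `|A| + `|hz| + 1 <= ls' -> False.
Proof. lra. Qed.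

Lemma caseA_hA (al A1 A2 B1 B2 K s cu cz : R) :
  al * B2 + al * A2 + s <= al * B1 + al * A1 + cu ->
  cz + al * A2 + al * B2 + al * al * K + (s - cz) <= cu + al * A1 + al * B1 + al * al * K.
Proof. lra. Qed.

Lemma caseA_fin (sg qzu quw Qv ms aQ : R) :
  0 <= (1 - sg) * qzu -> sg * (Qv + ms) <= sg * quw ->
  sg * sg * (- aQ) <= sg * sg * Qv -> sg * (sg * aQ) <= sg * (ms / 2) ->
  sg * ms / 2 <= (1 - sg) * qzu + sg * quw - (1 - sg) * sg * Qv.
Proof. lra. Qed.

Lemma caseB_fin (sB qzu hz hu dl K aK : R) :
  0 <= qzu -> sB * (hz + dl) <= sB * hu ->
  sB * sB * (- aK) <= sB * sB * K -> sB * (sB * aK) <= sB * (dl / 2) ->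
  sB * dl / 2 <= qzu - sB * hz + sB * hu + sB * sB * K.
Proof. lra. Qed.

Lemma dual_scale (f : X -> R) (k : R) : dual f -> dual (fun x => k * f x).
Proof.
move=> hf; split; first by move=> t x y; rewrite (dual_add _ _ hf) (dualZ _ _ hf); ring.
move=> x; have h1 := @cvgMl_tmp _ _ _ _ _ k _ (hf.2 x).
exact: (h1 (nbhs_filter x)).
Qed.

Lemma psi_key (T : set Z) : MX T -> locally_NI T -> forall g, lsc_Z g -> convex_fun_Z g ->
  (forall w, Zd w -> (g w <= c_plus_ind T w)%E) ->
  forall z, set_phi_le_c T z -> (g z <= (coupling z)%:E)%E.
Proof.
move=> hT hNI g hl hc hi z hM.
have [Top [[u0 Tu0] Tmon]] := hT.
have NIg := NI_global hT hNI.
have [hz Hz] := (Mchar T z).1 hM.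
rewrite leNgt; apply/negP => hgz.
have [r [hr1 hr2]] : exists r, coupling z < r /\ (r%:E < g z)%E.
  move: hgz; case: (g z) => [y| |] hgz.
  - exists ((coupling z + y) / 2); rewrite lte_fin in hgz; rewrite lte_fin; split; lra.
  - by exists (coupling z + 1); split; [lra|exact: ltry].
  - by rewrite ltNge leNye in hgz.
have [U [hU [xs [eps [eps0 hlsc]]]]] := hl z hz r hr2.
have [U' [oU' U'z cU' U'U]] := cvx_nbhs hU.
pose n := size xs.
pose vec (h : X -> R) : 'rV[R]_n := \row_(i < n) h (nth 0 xs i).
pose v0 := vec z.2.
pose O : set (EE n) := [set e : EE n | U' e.1.1 /\ (forall i, `|e.1.2 0 i - v0 0 i| < eps) /\ e.2 < r].
pose C : set (EE n) := [set e : EE n | exists h, dual h /\ vec h = e.1.2 /\ (g (e.1.1, h) <= (e.2 : R)%:E)%E].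
pose o0 : EE n := ((z.1, v0), r - 1).
pose cu (u : Z) : EE n := ((u.1, vec u.2), coupling u).
have Cu : forall u, T u -> C (cu u).
  case=> u1 u2 Tu; exists u2; split; first exact: (Top _ Tu).
  split => //; have := hi _ (Top _ Tu); rewrite /c_plus_ind asboolT //.
pose w0 : EE n := cu u0 - o0.
pose W : set (EE n) := [set e | exists o c, O o /\ C c /\ e = o - c + w0].
have Oo0 : O o0.
  split => //; split; last by rewrite /o0 /=; lra.
  by move=> i; rewrite subrr normr0.
have cO : cvx O.
  move=> a b [a1 [a2 a3]] [b1 [b2 b3]] t ht; split; [|split].
  - exact: (cU' a.1.1 b.1.1 a1 b1 t ht).
  - move=> i.
    have -> : (t *: a + (1 - t) *: b).1.2 0 i = t * a.1.2 0 i + (1 - t) * b.1.2 0 i.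
      by rewrite [LHS]mxE [X in X + _]mxE [X in _ + X]mxE.
    have -> : t * a.1.2 0 i + (1 - t) * b.1.2 0 i - v0 0 i =
      t * (a.1.2 0 i - v0 0 i) + (1 - t) * (b.1.2 0 i - v0 0 i) by ring.
    apply: le_lt_trans (conv_norm _ _ ht) _; exact: conv_lt.
  - exact: (conv_lt ht a3 b3).
have cC : cvx C.
  move=> a b [ha [hda [hva hga]]] [hb [hdb [hvb hgb]]] t ht.
  exists (fun x => t * ha x + (1 - t) * hb x); split; first exact: dual_comb.
  split.
    apply/rowP => i.
    have -> : (t *: a + (1 - t) *: b).1.2 = t *: a.1.2 + (1 - t) *: b.1.2 by [].
    by rewrite -hva -hvb !mxE.
  exact: (hc (a.1.1, ha) (b.1.1, hb) hda hdb a.2 b.2 hga hgb t ht).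
have cW : cvx W.
  move=> a b [o1 [c1 [Oo1 [Cc1 ->]]]] [o2 [c2 [Oo2 [Cc2 ->]]]] t ht.
  exists (t *: o1 + (1 - t) *: o2), (t *: c1 + (1 - t) *: c2).
  split; [exact: cO|split; [exact: cC|exact: combW]].
have W0 : W 0.
  exists o0, (cu u0); split => //; split; first exact: Cu.
  by rewrite /w0 addrA subrK subrr.
have WO : forall e, O (o0 + e) -> W e.
  move=> e Oe; exists (o0 + e), (cu u0); split => //; split; first exact: Cu.
  by rewrite /w0 addrA subrK addrC addKr.
have absO : forall e : EE n, exists2 d : R, 0 < d & O (o0 + d *: e).
  move=> e.
  have [s1 s10 hs1] := @seg_open R X U' z.1 e.1.1 oU' U'z.
  pose B := \sum_(i < n) `|e.1.2 0 i|.
  have B0 : 0 <= B by apply: sumr_ge0 => i _.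
  have Bi : forall i, `|e.1.2 0 i| <= B.
    by move=> i; rewrite /B (bigD1 i) //= lerDl; apply: sumr_ge0.
  pose d := Num.min s1 (Num.min (eps / (B + 1)) (1 / (`|e.2| + 1))).
  have B1 : 0 < B + 1 by lra.
  have e21 : 0 < `|e.2| + 1 by have := normr_ge0 e.2; lra.
  have d0 : 0 < d by rewrite !lt_min s10 !divr_gt0.
  have ds1 : d <= s1 by rewrite ge_min lexx.
  have dB : d * (B + 1) <= eps.
    by rewrite -ler_pdivlMr // ge_min orbC ge_min lexx.
  have de : d * (`|e.2| + 1) <= 1.
    rewrite -ler_pdivlMr // ge_min orbC ge_min orbC.
    by rewrite lexx !orbT.
  exists d => //; split; [|split].
  - have -> : (o0 + d *: e).1.1 = z.1 + d *: e.1.1 by [].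
    by apply: hs1; rewrite ds1 ltW.
  - move=> i.
    have -> : (o0 + d *: e).1.2 0 i = v0 0 i + d * e.1.2 0 i.
      by rewrite [LHS]mxE [X in _ + X]mxE.
    rewrite addrAC subrr add0r normrM (gtr0_norm d0).
    have := ler_wpM2l (ltW d0) (Bi i); lra.
  - have -> : (o0 + d *: e).2 = r - 1 + d * e.2 by [].
    have := ler_norm e.2; have := ler_wpM2l (ltW d0) (ler_norm e.2); lra.
have nW : ~ W w0.
  move=> [o [c [Oo [[h [hh [hv hg']]] he]]]].
  have oc : o = c.
    have := congr1 (fun x => x - w0) he; rewrite subrr addrK => /esym/eqP.
    by rewrite subr_eq0 => /eqP.
  subst o; move: Oo => [Uc [vc sc]].
  have := hlsc c.1.1 h (U'U _ Uc) hh.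
  have hxs : forall a, a \in xs -> `|h a - z.2 a| < eps.
    move=> a ha; have := vc (Ordinal (etrans (index_mem a xs) ha)).
    by rewrite -hv /v0 /vec !mxE /= nth_index.
  move=> /(_ hxs) hlt; have := lt_le_trans hlt hg'; rewrite lte_fin; lra.
have absW : forall e : EE n, exists2 d : R, 0 < d & W (d *: e).
  by move=> e; have [d d0 hd] := absO e; exists d => //; exact: WO.
have [L [[Ladd LZ] [LW Lw0]]] := HB_gauge cW W0 absW nW.
have L0 : L 0 = 0 by have := LZ 0 0; rewrite scale0r mul0r.
have LN : forall e, L (- e) = - L e by move=> e; rewrite -scaleN1r LZ mulN1r.
have Lsep : forall o c, O o -> C c -> L o <= L c.
  move=> o c Oo Cc.
  have := LW _ (ex_intro _ o (ex_intro _ c (conj Oo (conj Cc erefl)))).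
  rewrite (Ladd (o - c) w0) (Ladd o (- c)) LN; lra.
pose Lx (y : X) := L ((y, 0), 0).
pose Lv (v : 'rV[R]_n) := L ((0, v), 0).
pose lam := L ((0, 0), 1).
have Ldec : forall e : EE n, L e = Lx e.1.1 + Lv e.1.2 + lam * e.2.
  move=> [[e1 e2] e3]; rewrite /Lx /Lv /lam mulrC -LZ -!Ladd; congr L.
  apply: pext; [apply: pext|]; rewrite /= ?pD1 ?pD2 ?pZ1 ?pZ2 /=.
  - by rewrite scaler0 !addr0.
  - by rewrite scaler0 addr0 add0r.
  - by rewrite scaleRo mulr1 !add0r.
have Lxlin : linear_fun Lx.
  split => [y1 y2|t y]; rewrite /Lx.
    rewrite -Ladd; congr L.
    by apply: pext; [apply: pext|]; rewrite /= ?pD1 ?pD2 /= ?addr0.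
  rewrite -LZ; congr L.
  by apply: pext; [apply: pext|]; rewrite /= ?pZ1 ?pZ2 /= ?scaler0 ?mulr0.
have Lvadd : forall v1 v2, Lv (v1 + v2) = Lv v1 + Lv v2.
  move=> v1 v2; rewrite /Lv -Ladd; congr L.
  by apply: pext; [apply: pext|]; rewrite /= ?pD1 ?pD2 /= ?addr0.
have LvZ : forall t v, Lv (t *: v) = t * Lv v.
  move=> t v; rewrite /Lv -LZ; congr L.
  by apply: pext; [apply: pext|]; rewrite /= ?pZ1 ?pZ2 /= ?scaler0 ?mulr0.
have Lv0 : Lv 0 = 0 by have := LvZ 0 0; rewrite scale0r mul0r.
have Lxd : dual Lx.
  apply: (@lin_cont R X Lx [set y | U' (z.1 + y)] Lxlin).
    have h : nbhs (z.1 + (1 : R) *: (0 : X)) U'.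
      by rewrite scaler0 addr0; apply: open_nbhs_nbhs; split.
    have h2 : nbhs (0 : X) [set y | U' (z.1 + (1 : R) *: y)] := @aff_cont R X _ _ _ _ h.
    by apply: filterS h2 => y /=; rewrite scale1r.
  move=> y Uy; apply: LW; apply: WO; split; [|split].
  - by [].
  - move=> i.
    have -> : (o0 + ((y, 0), 0) : EE n).1.2 = v0 + 0 by [].
    by rewrite addr0 subrr normr0.
  - have -> : (o0 + ((y, 0), 0) : EE n).2 = r - 1 + 0 by [].
    lra.
pose a := \sum_(i < n) Lv 'e_i *: nth 0 xs i.
have Lvvec : forall h, dual h -> Lv (vec h) = h a.
  move=> h hh.
  rewrite {1}(row_sum_delta (vec h)) (big_morph Lv Lvadd Lv0).
  rewrite /a (big_morph h (fun x y => dual_add x y hh) (dual0 hh)).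
  apply: eq_bigr => i _; rewrite LvZ (dualZ _ _ hh) mxE mulrC //.
pose hf (v : Z) := Lx v.1 + v.2 a.
have Lcu : forall u, T u -> L (cu u) = hf u + lam * coupling u.
  move=> u Tu; rewrite Ldec /cu /= Lvvec //; exact: (Top _ Tu).
have Los : forall s, L (((z.1, v0), s) : EE n) = hf z + lam * s.
  by move=> s; rewrite Ldec /= Lvvec.
have Oos : forall s, s < r -> O (((z.1, v0), s) : EE n).
  by move=> s sr; split => //; split => // i; rewrite subrr normr0.
have key : forall u, T u -> forall s, s < r -> hf z + lam * s <= hf u + lam * coupling u.
  by move=> u Tu s sr; rewrite -Lcu // -Los; apply: Lsep; [exact: Oos|exact: Cu].
have lam0 : 0 <= lam.
  rewrite leNgt; apply/negP => hl0.
  pose q := (`|hf u0 + lam * coupling u0| + `|hf z| + 1) / lam.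
  pose s := Num.min (r - 1) q.
  have sr : s < r by rewrite gt_min; apply/orP; left; lra.
  have hq : lam * q = `|hf u0 + lam * coupling u0| + `|hf z| + 1.
    by rewrite /q mulrC -mulrA mulVf ?lt_eqF // mulr1.
  have hs : lam * q <= lam * s by rewrite ler_nM2l // ge_min lexx orbT.
  have := key u0 Tu0 s sr.
  have := ler_norm (hf u0 + lam * coupling u0).
  move: hs; rewrite hq => hs h2 h3.
  have h4 : - hf z <= `|hf z| by rewrite -normrN ler_norm.
  exact: (lam0_aux h2 h3 h4 hs).
have [lpos|lz] : 0 < lam \/ lam = 0.
  by move: lam0; rewrite le_eqVlt => /orP[/eqP ->|->]; [right|left].
- pose s := (r + coupling z) / 2.
  have sr : s < r by rewrite /s; lra.
  have ms0 : 0 < s - coupling z by rewrite /s; lra.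
  pose al := lam^-1.
  have al0 : 0 < al by rewrite invr_gt0.
  have alam : al * lam = 1 by rewrite mulVf ?gt_eqF.
  pose wA : Z := (- (al *: a), fun b => (- al) * Lx b).
  have ZwA : Zd wA := dual_scale (- al) Lxd.
  have qqA : forall u, Zd u -> qq u wA =
      coupling u + al * (u.2 a) + al * Lx u.1 + al * al * Lx a.
    move=> u hu; rewrite /qq /wA /coupling /= (dualN _ hu) (dualZ _ _ hu).
    by rewrite (dualN _ Lxd) (dualZ _ _ Lxd); ring.
  have hA : forall u, T u -> qq z wA + (s - coupling z) <= qq u wA.
    move=> u Tu; have k := key u Tu s sr.
    have k' := ler_wpM2l (ltW al0) k.
    rewrite !mulrDr !mulrA alam !mul1r in k'.
    rewrite !qqA //; last exact: Top.
    exact: (@caseA_hA al (u.2 a) (z.2 a) (Lx u.1) (Lx z.1) (Lx a) s (coupling u) (coupling z) k').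
  have Qm : 0 < `|qq z wA| + (s - coupling z) by have := normr_ge0 (qq z wA); lra.
  pose sg := (s - coupling z) / (2 * (`|qq z wA| + (s - coupling z))).
  have hsg : sg * `|qq z wA| + sg * (s - coupling z) = (s - coupling z) / 2.
    by rewrite -mulrDr /sg; field; rewrite gt_eqF.
  have sg0 : 0 < sg by rewrite /sg divr_gt0 // mulr_gt0.
  have sgQ := mulr_ge0 (ltW sg0) (normr_ge0 (qq z wA)).
  have sg12 : sg <= 1 / 2.
    have h : sg * (s - coupling z) <= 1 / 2 * (s - coupling z) by lra.
    by rewrite -(ler_pM2r ms0).
  pose wt := zcomb (1 - sg) z wA.
  apply: (NI_contra (NIg wt (Zd_comb _ hz ZwA))) (_ : 0 < sg * (s - coupling z) / 2) _.
    by rewrite divr_gt0 // mulr_gt0.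
  move=> u Tu; have Zu := Top u Tu.
  rewrite qq_comb // (_ : 1 - (1 - sg) = sg); last by ring.
  rewrite (qqC wA u).
  have h1 := mulr_ge0 (_ : 0 <= 1 - sg) (Hz u Tu).
  have h2 := ler_wpM2l (ltW sg0) (hA u Tu).
  have hQ : - `|qq z wA| <= qq z wA.
    by have := ler_norm (- qq z wA); rewrite normrN; lra.
  have h3 := ler_wpM2l (mulr_ge0 (ltW sg0) (ltW sg0)) hQ.
  have sgm := mulr_gt0 sg0 ms0.
  have h4 : sg * (sg * `|qq z wA|) <= sg * ((s - coupling z) / 2).
    by apply: ler_wpM2l; [exact: ltW|lra].
  exact: (caseA_fin (h1 ltac:(lra)) h2 h3 h4).
- pose e' : EE n := ((w0.1.1, w0.1.2), 0).
  have Le' : 1 <= L e'.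
    have h1 := Ldec e'; have h2 := Ldec w0; rewrite lz !mul0r !addr0 in h1 h2.
    by rewrite h1 -h2.
  have [dl dl0 Odl] := absO e'.
  have hB : forall u, T u -> hf z + dl <= hf u.
    move=> u Tu; have := Lsep _ _ Odl (Cu u Tu).
    rewrite Ladd LZ Lcu // Ldec /o0 /= Lvvec // lz !mul0r !addr0.
    have := ler_wpM2l (ltW dl0) Le'; rewrite mulr1 /hf; lra.
  pose sB := dl / (2 * (`|Lx a| + 1)).
  have Ka : 0 < `|Lx a| + 1 by have := normr_ge0 (Lx a); lra.
  have hsB : sB * `|Lx a| + sB = dl / 2.
    by rewrite -{2}(mulr1 sB) -mulrDr /sB; field; rewrite gt_eqF.
  have sB0 : 0 < sB by rewrite /sB divr_gt0 // mulr_gt0.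
  pose wB : Z := (z.1 - sB *: a, fun b => 1 * z.2 b + (- sB) * Lx b).
  have ZwB : Zd wB := dual_comb 1 (- sB) hz Lxd.
  apply: (NI_contra (NIg wB ZwB)) (_ : 0 < sB * dl / 2) _.
    by rewrite divr_gt0 // mulr_gt0.
  move=> u Tu; have Zu := Top u Tu.
  have -> : qq wB u = qq z u - sB * hf z + sB * hf u + sB * sB * Lx a.
    rewrite /qq /wB /hf /= !(dualB _ _ hz) !(dualB _ _ Lxd) !(dualB _ _ Zu).
    by rewrite !(dualZ _ _ hz) !(dualZ _ _ Lxd) !(dualZ _ _ Zu); ring.
  have h2 := ler_wpM2l (ltW sB0) (hB u Tu).
  have hQ : - `|Lx a| <= Lx a.
    by have := ler_norm (- Lx a); rewrite normrN; lra.
  have h3 := ler_wpM2l (mulr_ge0 (ltW sB0) (ltW sB0)) hQ.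
  have sBK := mulr_ge0 (ltW sB0) (normr_ge0 (Lx a)).
  have h4 : sB * (sB * `|Lx a|) <= sB * (dl / 2).
    by apply: ler_wpM2l; [exact: ltW|lra].
  exact: (caseB_fin (Hz u Tu) h2 h3 h4).
Qed.

End Psi.
Section PsiLe.
Context {R : realType} {X : tvsType R}.
Local Notation Z := (X * (X -> R))%type.



Lemma psi_le (T : set Z) : MX T -> locally_NI T -> forall z, set_phi_le_c T z ->
  (psi T z <= (coupling z)%:E)%E.
Proof.
move=> hT hNI z hz; apply: ge_ereal_sup => _ [g [hl [hc hi]] <-].
exact: psi_key hT hNI g hl hc hi z hz.
Qed.

End PsiLe.

Theorem theorem3p8 (R : realType) (X : tvsType R)
  (hX : hausdorff_space X) (hnt : exists x : X, x != 0)
  (T : set (X * (X -> R))) (hT : MX T) (hNI : locally_NI T) :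
  set_phi_eq_c T = set_phi_le_c T /\
  set_phi_le_c T = set_psi_eq_c T /\
  (MX (set_phi_eq_c T) /\ T `<=` set_phi_eq_c T /\
   identifiable (set_phi_eq_c T) /\
   forall S : set (X * (X -> R)),
     MX S -> T `<=` S -> identifiable S -> S = set_phi_eq_c T).
Proof.
have NIg := NI_global hT hNI.
have eq1 : set_phi_eq_c T = set_phi_le_c T.
  apply/seteqP; split => z [hz h]; split => //; first by rewrite h.
  by apply/eqP; rewrite eq_le h NIg.
have eq2 : set_phi_le_c T = set_psi_eq_c T.
  apply/seteqP; split => z hM.
    have [hz _] := hM; split => //; apply/eqP; rewrite eq_le psi_le //=.
    exact: le_trans (NIg z hz) (phi_le_psi hT z).
  have [hz hpsi] := hM; split => //; rewrite -hpsi; exact: phi_le_psi.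
rewrite eq1; split => //; split => //.
split; [|split; [|split]].
- split; first by move=> z [].
  split; last exact: M_mono.
  have [_ [[u Tu] _]] := hT; exists u; exact: T_sub_M.
- exact: T_sub_M.
- exact: ident_M.
- by move=> S hS TS hid; exact: uniq_M.
Qed.
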